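(* Let $\Lambda_1,\Lambda_2$ be bivariate tail dependence functions and, for $i=1,2$, let $C_i=C^{LEV}(\cdot\,;\Lambda_i)$ be the corresponding lower extreme value copulas, with survival copulas $\widehat C_i=C^{EV}(\cdot\,;\Lambda_i)$. Then the following are equivalent: (i) $\Lambda(\boldsymbol w;C_1)\le\Lambda(\boldsymbol w;C_2)$ for all $\boldsymbol w\in[0,\infty)^2$; (ii) $\widehat C_1(\boldsymbol u)\le\widehat C_2(\boldsymbol u)$ for all $\boldsymbol u\in[0,1]^2$; (iii) $C_1(\boldsymbol u)\le C_2(\boldsymbol u)$ for all $\boldsymbol u\in[0,1]^2$; (iv) $C_1\le_{loc}C_2$.
   Context: A 2-copula is a grounded, 2-increasing function $C:[0,1]^2\to[0,1]$ with uniform margins. Its tail dependence function is $\Lambda(\boldsymbol w;C)=\lim_{s\searrow0}C(s\boldsymbol w)/s$, $\boldsymbol w\in[0,\infty)^2$. A bivariate tail dependence function is a function $\Lambda:[0,\infty)^2\to[0,\infty)$ that is the tail dependence function of some 2-copula; equivalently, $\Lambda(w_1,w_2)=(w_1+w_2)A(w_1/(w_1+w_2))$ (and $\Lambda(0,0)=0$) for a concave $A:[0,1]\to[0,1/2]$ with $0\le A(t)\le\min\{t,1-t\}$. The extreme value copula is $C^{EV}(u_1,u_2;\Lambda)=\exp(\log u_1+\log u_2+\Lambda(-\log u_1,-\log u_2))$, and the lower extreme value copula is its survival copula $C^{LEV}(u_1,u_2;\Lambda)=u_1+u_2-1+C^{EV}(1-u_1,1-u_2;\Lambda)$; it satisfies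 $\Lambda(\cdot\,;C^{LEV}(\cdot;\Lambda))=\Lambda$. $C_1\le_{loc}C_2$ means there is $\varepsilon>0$ with $C_1\le C_2$ on $B_\varepsilon(\boldsymbol 0)\cap[0,1]^2$ (Euclidean ball). *)

(* Defs.v *)
From HB Require Import structures.
From mathcomp Require Import all_boot all_order all_algebra.
From mathcomp Require Import all_classical all_reals all_analysis.
Set Implicit Arguments. Unset Strict Implicit. Unset Printing Implicit Defensive.
Import Order.TTheory GRing.Theory Num.Theory.
Import numFieldNormedType.Exports.
Local Open Scope classical_set_scope.
Local Open Scope ring_scope.

Section Copulas.
Variable R : realType.

Definition in01 (x : R) : Prop := 0 <= x <= 1.

(* A 2-copula, represented as a function R -> R -> R; only its values on
   [0,1]^2 matter. *)
Definition is_copula2 (C : R -> R -> R) : Prop :=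
  (forall u v, in01 u -> in01 v -> in01 (C u v)) /\
  (forall u, in01 u -> C u 0 = 0 /\ C 0 u = 0) /\
  (forall u, in01 u -> C u 1 = u /\ C 1 u = u) /\
  (forall u1 u2 v1 v2, in01 u1 -> in01 u2 -> in01 v1 -> in01 v2 ->
     u1 <= u2 -> v1 <= v2 ->
     0 <= C u2 v2 - C u2 v1 - C u1 v2 + C u1 v1).

Definition tdf (C : R -> R -> R) (w1 w2 : R) : R :=
  lim ((fun s : R => C (s * w1) (s * w2) / s) @ 0^'+).

Definition is_btdf (L : R -> R -> R) : Prop :=
  exists C, is_copula2 C /\
    (forall w1 w2, 0 <= w1 -> 0 <= w2 ->
       (fun s : R => C (s * w1) (s * w2) / s) @ 0^'+ --> L w1 w2) /\
    (forall w1 w2, 0 <= w1 -> 0 <= w2 -> 0 <= L w1 w2).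

(* Extreme value copula, extended continuously by 0 on the axes
   (where log u is undefined). *)
Definition CEV (L : R -> R -> R) (u1 u2 : R) : R :=
  if (u1 == 0) || (u2 == 0) then 0
  else expR (ln u1 + ln u2 + L (- ln u1) (- ln u2)).

Definition CLEV (L : R -> R -> R) (u1 u2 : R) : R :=
  u1 + u2 - 1 + CEV L (1 - u1) (1 - u2).

Definition le_loc (C1 C2 : R -> R -> R) : Prop :=
  exists eps : R, 0 < eps /\
    forall u1 u2, in01 u1 -> in01 u2 -> u1 ^+ 2 + u2 ^+ 2 < eps ^+ 2 ->
      C1 u1 u2 <= C2 u1 u2.

End Copulas.

(* Main.v *)
Require Import Defs.
From HB Require Import structures.
From mathcomp Require Import all_boot all_order all_algebra.
From mathcomp Require Import all_classical all_reals all_analysis.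
From mathcomp Require Import ring lra.
Import Order.TTheory GRing.Theory Num.Theory.
Import numFieldNormedType.Exports.
Local Open Scope classical_set_scope.
Local Open Scope ring_scope.

Section S.
Context {R : realType}.

Definition ev (P : R -> Prop) := exists2 d : R, 0 < d & forall s, 0 < s -> s < d -> P s.

Lemma evI {P Q} : ev P -> ev Q -> ev (fun s => P s /\ Q s).
Proof.
move=> [d1 d10 H1] [d2 d20 H2]; exists (Num.min d1 d2); first by rewrite lt_min d10.
by move=> s s0; rewrite lt_min => /andP[a b]; split; [apply: H1|apply: H2].
Qed.

Lemma ev_ex {P} : ev P -> exists s, 0 < s /\ P s.
Proof.
move=> [d d0 H]; exists (d / 2); split; first by rewrite divr_gt0.
by apply: H; rewrite ?divr_gt0 // ltr_pdivrMr // ltr_pMr // ltr1n.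
Qed.

Lemma ev_le {c b : R} : 0 <= c -> 0 < b -> ev (fun s => s * c <= b).
Proof.
move=> c0 b0; exists (b / (1 + c)); first by rewrite divr_gt0 // ltr_wpDr.
move=> s s0 sd.
have h1 : 0 < 1 + c by rewrite ltr_wpDr.
rewrite ltr_pdivlMr // in sd.
nra.
Qed.

Lemma ev_lt {c : R} : 0 < c -> ev (fun s => s < c).
Proof. by move=> c0; exists c. Qed.

Lemma cvg0P (f : R -> R) (l : R) :
  f @ 0^'+ --> l <-> forall e : R, 0 < e -> ev (fun s => `|f s - l| < e).
Proof.
rewrite cvgrPdist_lt; split.
- move=> H e e0; have [d /= d0 Hd] := H e e0.
  exists d => // s s0 sd; rewrite distrC; apply: Hd => //=.
  by rewrite sub0r normrN gtr0_norm.
- move=> H e e0; have [d d0 Hd] := H e e0.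
  exists d => //= s /= + s0; rewrite sub0r normrN gtr0_norm// => sd.
  by rewrite distrC; apply: Hd.
Qed.

Lemma eq_eps {x y : R} (c : R) : 0 < c -> (forall e, 0 < e -> `|x - y| <= c * e) -> x = y.
Proof.
move=> c0 H; apply/eqP; rewrite -subr_eq0 -normr_le0; apply/ler_addgt0Pr => e e0.
rewrite add0r; have := H (e / c); rewrite divr_gt0 // => /(_ isT).
by rewrite mulrC divfK // gt_eqF.
Qed.

Lemma ln1m (x : R) : 0 <= x <= 1/2 -> x <= - ln (1 - x) <= x + 2 * x ^+ 2.
Proof.
move=> /andP[x0 x1]; apply/andP; split.
  rewrite lerNr; apply: le_ln1Dx; lra.
have p : 0 < 1 - x by lra.
rewrite -lnV ?posrE //.
have -> : (1 - x)^-1 = 1 + x / (1 - x) by field; lra.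
apply: le_trans (le_ln1Dx _) _.
  have : 0 <= x / (1 - x) by rewrite divr_ge0 // ltW.
  lra.
rewrite ler_pdivrMr //; nra.
Qed.

Lemma expR_bnd (x : R) : -(1/2) <= x <= 1/2 -> 0 <= expR x - 1 - x <= 2 * x ^+ 2.
Proof.
move=> /andP[x0 x1]; apply/andP; split.
  have := expR_ge1Dx x; lra.
have h := expR_ge1Dx (- x).
have p : 0 < 1 - x by lra.
have : expR x <= (1 - x)^-1.
  rewrite -[x]opprK expRN lef_pV2 ?posrE ?expR_gt0 //; lra.
have -> : (1 - x)^-1 = 1 + x + x^+2 / (1 - x) by field; lra.
have : x ^+ 2 / (1 - x) <= 2 * x ^+ 2.
  rewrite ler_pdivrMr //; nra.
lra.
Qed.


Lemma cop_mono1 {C : R -> R -> R} {u1 u2 v : R} : is_copula2 C -> in01 u1 -> in01 u2 -> in01 v -> u1 <= u2 ->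
  0 <= C u2 v - C u1 v <= u2 - u1.
Proof.
move=> [_ [Hg [Hm H2]]] h1 h2 hv le12.
have i0 : in01 (0:R) by rewrite /in01 lexx ler01.
have i1 : in01 (1:R) by rewrite /in01 lexx ler01.
have A := H2 u1 u2 0 v h1 h2 i0 hv le12 (proj1 (andP hv)).
have B := H2 u1 u2 v 1 h1 h2 hv i1 le12 (proj2 (andP hv)).
rewrite (proj1 (Hg _ h1)) (proj1 (Hg _ h2)) in A.
rewrite (proj1 (Hm _ h1)) (proj1 (Hm _ h2)) in B.
apply/andP; split; lra.
Qed.

Lemma cop_mono2 {C : R -> R -> R} {u v1 v2 : R} : is_copula2 C -> in01 u -> in01 v1 -> in01 v2 -> v1 <= v2 ->
  0 <= C u v2 - C u v1 <= v2 - v1.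
Proof.
move=> [_ [Hg [Hm H2]]] hu h1 h2 le12.
have i0 : in01 (0:R) by rewrite /in01 lexx ler01.
have i1 : in01 (1:R) by rewrite /in01 lexx ler01.
have A := H2 0 u v1 v2 i0 hu h1 h2 (proj1 (andP hu)) le12.
have B := H2 u 1 v1 v2 hu i1 h1 h2 (proj2 (andP hu)) le12.
rewrite (proj2 (Hg _ h1)) (proj2 (Hg _ h2)) in A.
rewrite (proj2 (Hm _ h1)) (proj2 (Hm _ h2)) in B.
apply/andP; split; lra.
Qed.

Lemma cop_lip {C : R -> R -> R} {u1 v1 u2 v2 : R} : is_copula2 C -> in01 u1 -> in01 v1 -> in01 u2 -> in01 v2 ->
  `|C u1 v1 - C u2 v2| <= `|u1 - u2| + `|v1 - v2|.
Proof.
move=> HC hu1 hv1 hu2 hv2.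
have E1 : `|C u1 v1 - C u2 v1| <= `|u1 - u2|.
  have [le|le] := leP u1 u2.
    have /andP[a b] := cop_mono1 HC hu1 hu2 hv1 le.
    rewrite distrC (distrC u1) !ger0_norm //; lra.
  have /andP[a b] := cop_mono1 HC hu2 hu1 hv1 (ltW le).
  rewrite !ger0_norm //; lra.
have E2 : `|C u2 v1 - C u2 v2| <= `|v1 - v2|.
  have [le|le] := leP v1 v2.
    have /andP[a b] := cop_mono2 HC hu2 hv1 hv2 le.
    rewrite distrC (distrC v1) !ger0_norm //; lra.
  have /andP[a b] := cop_mono2 HC hu2 hv2 hv1 (ltW le).
  rewrite !ger0_norm //; lra.
have -> : C u1 v1 - C u2 v2 = (C u1 v1 - C u2 v1) + (C u2 v1 - C u2 v2) by ring.
apply: le_trans (ler_normD _ _) _; exact: lerD.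
Qed.


Lemma in01_sm {s c M : R} : 0 < s -> 0 <= c -> c <= M -> s * M <= 1 -> in01 (s * c).
Proof. move=> s0 c0 cM sM; rewrite /in01; apply/andP; split; nra. Qed.

Definition FF (C : R -> R -> R) (w1 w2 : R) := fun s : R => C (s * w1) (s * w2) / s.

Lemma L_lip0 {L C : R -> R -> R} : is_copula2 C ->
  (forall w1 w2, 0 <= w1 -> 0 <= w2 -> FF C w1 w2 @ 0^'+ --> L w1 w2) ->
  forall p1 p2 q1 q2, 0 <= p1 -> 0 <= p2 -> 0 <= q1 -> 0 <= q2 ->
  L p1 p2 - L q1 q2 <= `|p1 - q1| + `|p2 - q2|.
Proof.
move=> HC Hc p1 p2 q1 q2 hp1 hp2 hq1 hq2; apply/ler_addgt0Pr => e e0.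
have e2 : 0 < e / 2 by rewrite divr_gt0.
have := Hc _ _ hp1 hp2; rewrite cvg0P => /(_ _ e2) Ep.
have := Hc _ _ hq1 hq2; rewrite cvg0P => /(_ _ e2) Eq.
have M0 : 0 <= p1 + p2 + q1 + q2 by lra.
have [s [s0 [[A B] Cm]]] := ev_ex (evI (evI Ep Eq) (ev_le M0 ltr01)).
have i1 : in01 (s * p1) by apply: (in01_sm s0 hp1 _ Cm); lra.
have i2 : in01 (s * p2) by apply: (in01_sm s0 hp2 _ Cm); lra.
have i3 : in01 (s * q1) by apply: (in01_sm s0 hq1 _ Cm); lra.
have i4 : in01 (s * q2) by apply: (in01_sm s0 hq2 _ Cm); lra.
have K := cop_lip HC i1 i2 i3 i4.
rewrite -!mulrBr !normrM (gtr0_norm s0) -mulrDr in K.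
have K2 : `|FF C p1 p2 s - FF C q1 q2 s| <= `|p1 - q1| + `|p2 - q2|.
  by rewrite /FF -mulrBl normrM normfV (gtr0_norm s0) ler_pdivrMr // [_ * s]mulrC.
move: A B K2; rewrite !ltr_norml !ler_norml => /andP[a1 a2] /andP[b1 b2] /andP[c1 c2].
lra.
Qed.

Lemma L_lip {L C : R -> R -> R} : is_copula2 C ->
  (forall w1 w2, 0 <= w1 -> 0 <= w2 -> FF C w1 w2 @ 0^'+ --> L w1 w2) ->
  forall p1 p2 q1 q2, 0 <= p1 -> 0 <= p2 -> 0 <= q1 -> 0 <= q2 ->
  `|L p1 p2 - L q1 q2| <= `|p1 - q1| + `|p2 - q2|.
Proof.
move=> HC Hc p1 p2 q1 q2 hp1 hp2 hq1 hq2; rewrite ler_norml.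
have := L_lip0 HC Hc _ _ _ _ hp1 hp2 hq1 hq2.
have := L_lip0 HC Hc _ _ _ _ hq1 hq2 hp1 hp2.
rewrite (distrC q1) (distrC q2) => a b; apply/andP; split; lra.
Qed.

Lemma L_hom {L C : R -> R -> R} :
  (forall w1 w2, 0 <= w1 -> 0 <= w2 -> FF C w1 w2 @ 0^'+ --> L w1 w2) ->
  forall t w1 w2, 0 < t -> 0 <= w1 -> 0 <= w2 -> L (t * w1) (t * w2) = t * L w1 w2.
Proof.
move=> Hc t w1 w2 t0 h1 h2.
have t1 : 0 <= t * w1 by rewrite mulr_ge0 // ltW.
have t2 : 0 <= t * w2 by rewrite mulr_ge0 // ltW.
apply: (eq_eps (1 + t)); first lra.
move=> e e0; apply: ltW.
have := Hc _ _ t1 t2; rewrite cvg0P => /(_ _ e0) Eg.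
have := Hc _ _ h1 h2; rewrite cvg0P => /(_ _ e0) [d d0 Ef].
have [s [s0 [A B]]] := ev_ex (evI Eg (ev_lt (divr_gt0 d0 t0))).
have st0 : 0 < s * t by rewrite mulr_gt0.
have := Ef _ st0; rewrite -ltr_pdivlMr //; move/(_ B) => Bf.
have eq : FF C (t * w1) (t * w2) s = t * FF C w1 w2 (s * t).
  rewrite /FF !mulrA; field; rewrite ?gt_eqF //.
rewrite eq in A.
have Bt : `|t * FF C w1 w2 (s * t) - t * L w1 w2| < t * e.
  by rewrite -mulrBr normrM gtr0_norm // ltr_pM2l.
move: A Bt; rewrite !ltr_norml => /andP[a1 a2] /andP[b1 b2].
apply/andP; split; nra.
Qed.


Lemma ev_mono {P Q : R -> Prop} : ev P -> (forall s, 0 < s -> P s -> Q s) -> ev Q.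
Proof. by move=> [d d0 H] HQ; exists d => // s s0 sd; apply: HQ => //; apply: H. Qed.

Lemma key {L : R -> R -> R} : is_btdf L -> forall w1 w2, 0 <= w1 -> 0 <= w2 ->
  FF (CLEV L) w1 w2 @ 0^'+ --> L w1 w2.
Proof.
move=> [C [HC [Hc _]]] w1 w2 h1 h2.
have Hc' : forall w1 w2, 0 <= w1 -> 0 <= w2 -> FF C w1 w2 @ 0^'+ --> L w1 w2 by exact: Hc.
have Lip := L_lip HC Hc'.
have Hom := L_hom Hc'.
rewrite cvg0P => e e0.
set W := w1 + w2; set Lw := L w1 w2; set K := 3 * W + `|Lw|; set M := 2 * K ^+ 2 + 4 * W ^+ 2.
have W0 : 0 <= W by rewrite /W; lra.
have K0 : 0 <= K by rewrite /K; have := normr_ge0 Lw; lra.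
have M0 : 0 <= M by rewrite /M; nra.
have hh : 0 < 1 / 2 :> R by lra.
have e2 : 0 < e / 2 by lra.
apply: (ev_mono (evI (evI (ev_le W0 hh) (ev_le K0 hh)) (ev_le M0 e2))).
move=> s s0 [[sW sK] sM].
set x1 := s * w1; set x2 := s * w2.
have x10 : 0 <= x1 by rewrite mulr_ge0 // ltW.
have x20 : 0 <= x2 by rewrite mulr_ge0 // ltW.
have xW : x1 + x2 = s * W by rewrite /x1 /x2 /W; ring.
have x1h : x1 <= 1/2 by nra.
have x2h : x2 <= 1/2 by nra.
have /andP[a1 a2] := ln1m x1 ltac:(apply/andP; split => //).
have /andP[b1 b2] := ln1m x2 ltac:(apply/andP; split => //).
set a := - ln (1 - x1) in a1 a2; set b := - ln (1 - x2) in b1 b2.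
have a0 : 0 <= a by lra.
have b0 : 0 <= b by lra.
have F3 := Lip a b x1 x2 a0 b0 x10 x20.
rewrite (ger0_norm (x:=a - x1)) ?(ger0_norm (x:=b - x2)) ?subr_ge0 // in F3.
rewrite /x1 /x2 Hom // -/x1 -/x2 in F3.
have /andP[r1 r2] : - (a - x1 + (b - x2)) <= L a b - s * Lw <= a - x1 + (b - x2).
  by rewrite -ler_norml.
have Q : x1 ^+ 2 + x2 ^+ 2 <= (s * W) ^+ 2 by rewrite -xW; nra.
have y2 : (s * W) ^+ 2 <= s * W / 2 by nra.
have /andP[l1 l2] : - `|Lw| <= Lw <= `|Lw| by rewrite -ler_norml.
have sL1 : s * Lw <= s * `|Lw| by nra.
have sL2 : - (s * `|Lw|) <= s * Lw by nra.
have sKe : s * K = 3 * (s * W) + s * `|Lw| by rewrite /K; ring.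
set E := ln (1 - x1) + ln (1 - x2) + L a b.
have EE : E = - a - b + L a b by rewrite /E /a /b; ring.
have Eb1 : E <= s * K by lra.
have Eb2 : - (s * K) <= E by lra.
have /andP[X1 X2] := expR_bnd E ltac:(apply/andP; split; lra).
have E2 : E ^+ 2 <= (s * K) ^+ 2 by nra.
have sMe : s * (s * M) <= s * (e / 2) by rewrite ler_pM2l.
have sMe' : s * (s * M) = 2 * (s * K) ^+ 2 + 4 * (s * W) ^+ 2 by rewrite /M; ring.
have HCLEV : FF (CLEV L) w1 w2 s = (x1 + x2 - 1 + expR E) / s.
  rewrite /FF /CLEV /CEV -/x1 -/x2.
  have -> : (1 - x1 == 0) = false by apply/negbTE; rewrite subr_eq0 eq_sym; apply/negP => /eqP; lra.
  have -> : (1 - x2 == 0) = false by apply/negbTE; rewrite subr_eq0 eq_sym; apply/negP => /eqP; lra.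
  by [].
rewrite HCLEV.
have -> : (x1 + x2 - 1 + expR E) / s - Lw = (x1 + x2 - 1 + expR E - s * Lw) / s.
  by field; rewrite gt_eqF.
rewrite normrM normfV (gtr0_norm s0) ltr_pdivrMr // ltr_norml.
have se : s * (e / 2) < s * e by rewrite ltr_pM2l //; lra.
apply/andP; split; lra.
Qed.


Lemma tdf_eq {L : R -> R -> R} : is_btdf L -> forall w1 w2, 0 <= w1 -> 0 <= w2 ->
  tdf (CLEV L) w1 w2 = L w1 w2.
Proof. by move=> HL w1 w2 h1 h2; rewrite /tdf; apply: cvg_lim; [exact: Rhausdorff | exact: (key HL w1 w2 h1 h2)]. Qed.

Lemma Lle_CEV {L1 L2 : R -> R -> R} :
  (forall w1 w2, 0 <= w1 -> 0 <= w2 -> L1 w1 w2 <= L2 w1 w2) ->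
  forall u1 u2, in01 u1 -> in01 u2 -> CEV L1 u1 u2 <= CEV L2 u1 u2.
Proof.
move=> H u1 u2 /andP[a1 a2] /andP[b1 b2]; rewrite /CEV.
case: (boolP ((u1 == 0) || (u2 == 0))) => [//|/norP[n1 n2]].
rewrite ler_expR lerD2l; apply: H; rewrite oppr_ge0 ln_le0 //.
Qed.

Lemma CEV_Lle {L1 L2 : R -> R -> R} :
  (forall u1 u2, in01 u1 -> in01 u2 -> CEV L1 u1 u2 <= CEV L2 u1 u2) ->
  forall w1 w2, 0 <= w1 -> 0 <= w2 -> L1 w1 w2 <= L2 w1 w2.
Proof.
move=> H w1 w2 h1 h2.
have i1 : in01 (expR (- w1)) by rewrite /in01 (ltW (expR_gt0 _)) expR_le1 oppr_le0.
have i2 : in01 (expR (- w2)) by rewrite /in01 (ltW (expR_gt0 _)) expR_le1 oppr_le0.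
have := H _ _ i1 i2; rewrite /CEV !(gt_eqF (expR_gt0 _)) /= !expRK !opprK.
by rewrite ler_expR lerD2l.
Qed.

Lemma loc_Lle {L1 L2 : R -> R -> R} : is_btdf L1 -> is_btdf L2 ->
  le_loc (CLEV L1) (CLEV L2) ->
  forall w1 w2, 0 <= w1 -> 0 <= w2 -> L1 w1 w2 <= L2 w1 w2.
Proof.
move=> H1 H2 [eps [eps0 H]] w1 w2 h1 h2; apply/ler_addgt0Pr => e e0.
have e2 : 0 < e / 2 by lra.
have ep2 : 0 < eps / 2 by lra.
have := key H1 _ _ h1 h2; rewrite cvg0P => /(_ _ e2) E1.
have := key H2 _ _ h1 h2; rewrite cvg0P => /(_ _ e2) E2.
have W0 : 0 <= w1 + w2 by lra.
have [s [s0 [[[[A B] c1] c2] c3]]] :=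
  ev_ex (evI (evI (evI (evI E1 E2) (ev_le h1 ep2)) (ev_le h2 ep2)) (ev_le W0 ltr01)).
have i1 : in01 (s * w1) by apply: (in01_sm s0 h1 _ c3); lra.
have i2 : in01 (s * w2) by apply: (in01_sm s0 h2 _ c3); lra.
have x10 : 0 <= s * w1 by rewrite mulr_ge0 // ltW.
have x20 : 0 <= s * w2 by rewrite mulr_ge0 // ltW.
have sq : (s * w1) ^+ 2 + (s * w2) ^+ 2 < eps ^+ 2 by nra.
have := H _ _ i1 i2 sq => HC.
have HF : FF (CLEV L1) w1 w2 s <= FF (CLEV L2) w1 w2 s.
  by rewrite /FF ler_pM2r // invr_gt0.
move: A B; rewrite !ltr_norml => /andP[a1 a2] /andP[b1 b2]; lra.
Qed.

End S.

Theorem mainTheorem9 (R : realType) (L1 L2 : R -> R -> R) :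
  is_btdf L1 -> is_btdf L2 ->
  let C1 := CLEV L1 in let C2 := CLEV L2 in
  let P1 := forall w1 w2 : R, 0 <= w1 -> 0 <= w2 -> tdf C1 w1 w2 <= tdf C2 w1 w2 in
  let P2 := forall u1 u2 : R, in01 u1 -> in01 u2 -> CEV L1 u1 u2 <= CEV L2 u1 u2 in
  let P3 := forall u1 u2 : R, in01 u1 -> in01 u2 -> C1 u1 u2 <= C2 u1 u2 in
  let P4 := le_loc C1 C2 in
  (P1 <-> P2) /\ (P2 <-> P3) /\ (P3 <-> P4).
Proof.
move=> H1 H2 C1 C2 P1 P2 P3 P4.
have e1 : P1 <-> (forall w1 w2, 0 <= w1 -> 0 <= w2 -> L1 w1 w2 <= L2 w1 w2).
  split=> H w1 w2 h1 h2; have := H w1 w2 h1 h2;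
    by rewrite /C1 /C2 (tdf_eq H1) // (tdf_eq H2).
have i1m : forall u, in01 u -> in01 (1 - u :> R).
  by move=> u /andP[a b]; rewrite /in01; apply/andP; split; lra.
have p23 : P2 -> P3.
  move=> H u1 u2 h1 h2; rewrite /C1 /C2 /CLEV lerD2l; apply: H; exact: i1m.
have p32 : P3 -> P2.
  move=> H u1 u2 h1 h2; have := H _ _ (i1m _ h1) (i1m _ h2).
  by rewrite /C1 /C2 /CLEV !subKr lerD2l.
have p34 : P3 -> P4.
  move=> H; exists 1; split; first exact: ltr01.
  by move=> u1 u2 h1 h2 _; apply: H.
have p41 : P4 -> P1 by move=> H; apply/e1; exact: loc_Lle.
have p12 : P1 -> P2 by move/e1; exact: Lle_CEV.
have p21 : P2 -> P1 by move=> H; apply/e1; exact: CEV_Lle.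
by split; [|split]; split; auto.
Qed.
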